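(* Let $\mathcal{F}[0,1]$ be a Banach algebra (over $\mathbb{F}\in\{\mathbb{R},\mathbb{C}\}$, with pointwise operations, norm $\|\cdot\|_{\mathcal F}$) of functions $[0,1]\to\mathbb{F}$ that is continuously embedded into $B[0,1]$. Suppose $\mathcal{F}[0,1]$ satisfies the symmetry property, the inverse closedness property and the selection principle. Then the multiplication in $\mathcal{F}[0,1]$ is locally open at every pair of jointly nondegenerate functions $(F,G)\in(\mathcal{F}[0,1])^2$; i.e. for every $\varepsilon>0$ there is $\delta>0$ such that every $u\in\mathcal F[0,1]$ with $\|u-FG\|_{\mathcal F}<\delta$ can be written as $u=fg$ with $f,g\in\mathcal F[0,1]$, $\|f-F\|_{\mathcal F}<\varepsilon$, $\|g-G\|_{\mathcal F}<\varepsilon$.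
   Context: $B[0,1]$ denotes the Banach algebra of all bounded functions $f:[0,1]\to\mathbb{F}$ with norm $\|f\|_\infty=\sup_{x\in[0,1]}|f(x)|$. Functions $f,g\in B[0,1]$ are jointly nondegenerate if $\inf_{x\in[0,1]}(|f(x)|+|g(x)|)>0$. $\mathcal F[0,1]$ has the symmetry property if for every $f\in\mathcal F[0,1]$ its complex conjugate $\overline f\in\mathcal F[0,1]$ and $\|\overline f\|_{\mathcal F}=\|f\|_{\mathcal F}$. It has the inverse closedness property if for every $f\in\mathcal F[0,1]$ with $\inf_{x\in[0,1]}|f(x)|>0$ one has $1/f\in\mathcal F[0,1]$ and $\|1/f\|_{\mathcal F}\le(\inf_{x\in[0,1]}|f(x)|)^{-2}\|f\|_{\mathcal F}$. It satisfies the selection principle if every sequence $(f_n)$ with $\sup_n\|f_n\|_{\mathcal F}<\infty$ has a subsequence converging pointwise on $[0,1]$ to some $f\in\mathcal F[0,1]$. Multiplication is locally open at $(a,b)$ if for every $\varepsilon>0$ there is $\delta>0$ with $B(ab,\delta)\subset B(a,\varepsilon)\cdot B(b,\varepsilon)$, where $B(a,r)$ is the open ball of radius $r$ about $a$ and $X\cdot Y=\{xy: x\in X, y\in Y\}$. *)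

(* Defs.v *)
From Stdlib Require Import Reals Lra.
Open Scope R_scope.

Inductive sfield := RealF | ComplexF.

(* Complex numbers as pairs (re, im). *)
Definition Cplx : Type := (R * R)%type.
Definition Cadd (z w : Cplx) : Cplx := (fst z + fst w, snd z + snd w).
Definition Cmul (z w : Cplx) : Cplx :=
  (fst z * fst w - snd z * snd w, fst z * snd w + snd z * fst w).
Definition Copp (z : Cplx) : Cplx := (- fst z, - snd z).
Definition Cinv (z : Cplx) : Cplx :=
  let d := fst z * fst z + snd z * snd z in (fst z / d, - snd z / d).
Definition Cabs (z : Cplx) : R := sqrt (fst z * fst z + snd z * snd z).
Definition Cconj (z : Cplx) : Cplx := (fst z, - snd z).

Definition K (s : sfield) : Type :=
  match s with RealF => R | ComplexF => Cplx end.

Definition K0 (s : sfield) : K s :=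
  match s return K s with RealF => 0 | ComplexF => (0, 0) end.
Definition Kadd (s : sfield) : K s -> K s -> K s :=
  match s return K s -> K s -> K s with RealF => Rplus | ComplexF => Cadd end.
Definition Kmul (s : sfield) : K s -> K s -> K s :=
  match s return K s -> K s -> K s with RealF => Rmult | ComplexF => Cmul end.
Definition Kopp (s : sfield) : K s -> K s :=
  match s return K s -> K s with RealF => Ropp | ComplexF => Copp end.
Definition Kinv (s : sfield) : K s -> K s :=
  match s return K s -> K s with RealF => Rinv | ComplexF => Cinv end.
Definition Kabs (s : sfield) : K s -> R :=
  match s return K s -> R with RealF => Rabs | ComplexF => Cabs end.
Definition Kconj (s : sfield) : K s -> K s :=
  match s return K s -> K s with RealF => (fun x => x) | ComplexF => Cconj end.

Definition I01 : Type := { x : R | 0 <= x <= 1 }.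
Definition fn (s : sfield) : Type := I01 -> K s.

Definition fzero s : fn s := fun _ => K0 s.
Definition fadd s (f g : fn s) : fn s := fun x => Kadd s (f x) (g x).
Definition fsub s (f g : fn s) : fn s := fun x => Kadd s (f x) (Kopp s (g x)).
Definition fmul s (f g : fn s) : fn s := fun x => Kmul s (f x) (g x).
Definition fscal s (c : K s) (f : fn s) : fn s := fun x => Kmul s c (f x).
Definition finv s (f : fn s) : fn s := fun x => Kinv s (f x).
Definition fconj s (f : fn s) : fn s := fun x => Kconj s (f x).

Definition is_banach_function_algebra (s : sfield)
    (A : fn s -> Prop) (N : fn s -> R) : Prop :=
  A (fzero s) /\
  (forall f g, A f -> A g -> A (fadd s f g)) /\
  (forall c f, A f -> A (fscal s c f)) /\
  (forall f g, A f -> A g -> A (fmul s f g)) /\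
  (forall f, A f -> 0 <= N f) /\
  (forall f, A f -> N f = 0 -> f = fzero s) /\
  (forall c f, A f -> N (fscal s c f) = Kabs s c * N f) /\
  (forall f g, A f -> A g -> N (fadd s f g) <= N f + N g) /\
  (forall f g, A f -> A g -> N (fmul s f g) <= N f * N g) /\
  (forall u : nat -> fn s, (forall n, A (u n)) ->
     (forall eps, eps > 0 -> exists n0, forall n m, (n >= n0)%nat -> (m >= n0)%nat ->
        N (fsub s (u n) (u m)) < eps) ->
     exists f, A f /\ forall eps, eps > 0 -> exists n0, forall n, (n >= n0)%nat ->
        N (fsub s (u n) f) < eps).

Definition continuously_embedded_in_B (s : sfield) (A : fn s -> Prop) (N : fn s -> R) : Prop :=
  exists C, 0 <= C /\ forall f, A f -> forall x, Kabs s (f x) <= C * N f.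

Definition symmetry_property (s : sfield) (A : fn s -> Prop) (N : fn s -> R) : Prop :=
  forall f, A f -> A (fconj s f) /\ N (fconj s f) = N f.

(* inf_x |f x| > 0 with the bound ||1/f|| <= (inf|f|)^(-2) ||f||.  Since inf|f| is
   itself a positive lower bound of |f| and is the largest one, quantifying over all
   positive lower bounds m of |f| is literally equivalent. *)
Definition inverse_closedness_property (s : sfield) (A : fn s -> Prop) (N : fn s -> R) : Prop :=
  forall f, A f -> forall m, 0 < m -> (forall x, m <= Kabs s (f x)) ->
    A (finv s f) /\ N (finv s f) <= / (m * m) * N f.

Definition pointwise_cv (s : sfield) (u : nat -> fn s) (f : fn s) : Prop :=
  forall x eps, eps > 0 -> exists n0, forall n, (n >= n0)%nat ->
    Kabs s (Kadd s (u n x) (Kopp s (f x))) < eps.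

Definition selection_principle (s : sfield) (A : fn s -> Prop) (N : fn s -> R) : Prop :=
  forall u : nat -> fn s, (forall n, A (u n)) -> (exists M, forall n, N (u n) <= M) ->
    exists (phi : nat -> nat) (f : fn s),
      (forall n, (phi n < phi (S n))%nat) /\ A f /\ pointwise_cv s (fun n => u (phi n)) f.

Definition jointly_nondegenerate (s : sfield) (f g : fn s) : Prop :=
  exists m, 0 < m /\ forall x, m <= Kabs s (f x) + Kabs s (g x).

Definition mult_locally_open_at (s : sfield) (A : fn s -> Prop) (N : fn s -> R)
    (F G : fn s) : Prop :=
  forall eps, eps > 0 -> exists delta, delta > 0 /\
    forall u, A u -> N (fsub s u (fmul s F G)) < delta ->
      exists f g, A f /\ A g /\ N (fsub s f F) < eps /\ N (fsub s g G) < eps /\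
                  u = fmul s f g.

(* Main.v *)
Require Import Defs.
From Stdlib Require Import Reals Lra Psatz FunctionalExtensionality.
Open Scope R_scope.

Definition K1 (s : sfield) : K s :=
  match s return K s with RealF => 1 | ComplexF => (1, 0) end.

Ltac kring s :=
  destruct s; cbn [K Kadd Kmul Kopp Kconj K0 K1] in *;
  [ring | unfold Cadd, Cmul, Copp, Cconj; apply injective_projections; cbn [fst snd]; ring].

Lemma fext s (f g : fn s) : (forall x, f x = g x) -> f = g.
Proof. intros; apply functional_extensionality; auto. Qed.

Lemma fsub_scal s (f g : fn s) : fsub s f g = fadd s f (fscal s (Kopp s (K1 s)) g).
Proof. apply fext; intro x; unfold fsub, fadd, fscal. kring s. Qed.

Lemma Kabs_m1 s : Kabs s (Kopp s (K1 s)) = 1.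
Proof. destruct s; simpl. rewrite Rabs_Ropp, Rabs_R1; auto.
unfold Cabs; simpl. replace (- (1) * - (1) + - 0 * - 0) with 1 by ring. apply sqrt_1. Qed.

Lemma Kabs_nn s a : 0 <= Kabs s a.
Proof. destruct s; simpl. apply Rabs_pos. apply sqrt_pos. Qed.

Lemma Kinv_l s d : 0 < Kabs s d -> Kmul s (Kinv s d) d = K1 s.
Proof. destruct s; simpl; intro H.
- apply Rinv_l. intro E; subst; rewrite Rabs_R0 in H; lra.
- destruct d as [a b]; unfold Cabs, Cinv, Cmul in *; simpl in *.
  assert (Hd : a*a+b*b <> 0). { intro E; rewrite E, sqrt_0 in H; lra. }
  apply injective_projections; simpl; field; auto.
Qed.

Lemma Kabs_D s a b : Kabs s (Kadd s (Kmul s a (Kconj s a)) (Kmul s b (Kconj s b)))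
   = Kabs s a ^ 2 + Kabs s b ^ 2.
Proof. destruct s; simpl.
- unfold Rabs; repeat destruct Rcase_abs; nra.
- destruct a as [a1 a2], b as [b1 b2]; unfold Cabs, Cmul, Cadd, Cconj; simpl.
  idtac.
  replace ((a1 * a1 - a2 * - a2 + (b1 * b1 - b2 * - b2)) * (a1 * a1 - a2 * - a2 + (b1 * b1 - b2 * - b2)) +
   (a1 * - a2 + a2 * a1 + (b1 * - b2 + b2 * b1)) * (a1 * - a2 + a2 * a1 + (b1 * - b2 + b2 * b1)))
   with ((a1 * a1 + a2 * a2 + (b1 * b1 + b2 * b2)) * (a1 * a1 + a2 * a2 + (b1 * b1 + b2 * b2))) by ring.
  rewrite sqrt_square by nra. rewrite !Rmult_1_r, !sqrt_sqrt by nra. ring.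
Qed.

Lemma Ksub0 s a b : Kadd s a (Kopp s b) = K0 s -> a = b.
Proof. destruct s; simpl; intro H. lra.
destruct a, b; unfold Cadd, Copp in H; simpl in H; injection H; intros; f_equal; lra. Qed.

Lemma Kabs0 s : Kabs s (K0 s) = 0.
Proof. destruct s; simpl. apply Rabs_R0. unfold Cabs; simpl. replace (0*0+0*0) with 0 by ring; apply sqrt_0. Qed.

Section S.
Context (s : sfield) (A : fn s -> Prop) (N : fn s -> R) (HB : is_banach_function_algebra s A N).

Lemma A_sub f g : A f -> A g -> A (fsub s f g).
Proof. destruct HB as (H0&Hadd&Hsc&_). intros; rewrite fsub_scal; auto. Qed.

Lemma A_zero : A (fzero s).
Proof. destruct HB as (H0&_). auto. Qed.

Lemma A_add f g : A f -> A g -> A (fadd s f g).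
Proof. destruct HB as (H0&Hadd&_). auto. Qed.

Lemma A_mul f g : A f -> A g -> A (fmul s f g).
Proof. destruct HB as (H0&Hadd&Hsc&Hmul&_). auto. Qed.

Lemma N_nn f : A f -> 0 <= N f.
Proof. destruct HB as (H0&Hadd&Hsc&Hmul&Hn&_). auto. Qed.

Lemma N_mul f g : A f -> A g -> N (fmul s f g) <= N f * N g.
Proof. destruct HB as (H0&Hadd&Hsc&Hmul&Hn&Hz&Hns&Ht&Hm&_). auto. Qed.

Lemma N_add f g : A f -> A g -> N (fadd s f g) <= N f + N g.
Proof. destruct HB as (H0&Hadd&Hsc&Hmul&Hn&Hz&Hns&Ht&Hm&_). auto. Qed.

Lemma N_zero : N (fzero s) = 0.
Proof. destruct HB as (H0&Hadd&Hsc&Hmul&Hn&Hz&Hns&Ht&Hm&_).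
  replace (fzero s) with (fscal s (K0 s) (fzero s)).
  rewrite Hns, Kabs0 by auto. ring.
  apply fext; intro x; unfold fscal, fzero. kring s. Qed.

Lemma N_sub_sym f g : A f -> A g -> N (fsub s f g) = N (fsub s g f).
Proof. destruct HB as (H0&Hadd&Hsc&Hmul&Hn&Hz&Hns&Ht&Hm&_). intros.
  replace (fsub s g f) with (fscal s (Kopp s (K1 s)) (fsub s f g)).
  rewrite Hns, Kabs_m1 by (apply A_sub; auto). ring.
  apply fext; intro x; unfold fscal, fsub. kring s. Qed.

Lemma N_sub_le f g : A f -> A g -> N (fsub s f g) <= N f + N g.
Proof. destruct HB as (H0&Hadd&Hsc&Hmul&Hn&Hz&Hns&Ht&Hm&_). intros.
  rewrite fsub_scal. eapply Rle_trans. apply Ht; auto.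
  rewrite Hns, Kabs_m1 by auto. lra. Qed.

Lemma N_tri a b c : A a -> A b -> A c ->
  N (fsub s a c) <= N (fsub s a b) + N (fsub s b c).
Proof. intros. replace (fsub s a c) with (fadd s (fsub s a b) (fsub s b c)).
  apply N_add; apply A_sub; auto.
  apply fext; intro x; unfold fadd, fsub. kring s. Qed.

Lemma N_tri0 a b : A a -> A b -> N a <= N (fsub s a b) + N b.
Proof. intros. replace a with (fadd s (fsub s a b) b) at 1.
  apply N_add; try apply A_sub; auto.
  apply fext; intro x; unfold fadd, fsub. kring s. Qed.

Lemma le_eps x r : (forall eps, eps > 0 -> x <= r + eps) -> x <= r.
Proof. intros H. destruct (Rle_dec x r); auto. specialize (H ((x - r)/2)). lra. Qed.

Lemma fixpt (Phi : fn s -> fn s) r : 0 <= r ->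
  (forall t, A t -> N t <= r -> A (Phi t) /\ N (Phi t) <= r) ->
  (forall t t', A t -> A t' -> N t <= r -> N t' <= r ->
     N (fsub s (Phi t) (Phi t')) <= /2 * N (fsub s t t')) ->
  exists t, A t /\ N t <= r /\ Phi t = t.
Proof.
  intros Hr Hball Hlip.
  set (u := fun n => Nat.iter n Phi (fzero s)).
  assert (Hu : forall n, A (u n) /\ N (u n) <= r).
  { induction n. simpl. split. apply A_zero. rewrite N_zero; auto.
    apply Hball; tauto. }
  set (B := N (fsub s (u 1%nat) (u 0%nat))).
  assert (HBn : 0 <= B). { apply N_nn, A_sub; apply Hu. }
  assert (Hstep : forall n, N (fsub s (u (S n)) (u n)) <= (/2)^n * B).
  { induction n. rewrite pow_O, Rmult_1_l; apply Rle_refl.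
    change (u (S (S n))) with (Phi (u (S n))). change (u (S n)) with (Phi (u n)) at 2.
    eapply Rle_trans. apply Hlip; apply Hu.
    simpl. change (Phi (u n)) with (u (S n)). lra. }
  assert (Hc : forall n k, N (fsub s (u (n + k)%nat) (u n)) <= 2 * B * ((/2)^n - (/2)^(n+k))).
  { intros n k; induction k.
    - rewrite Nat.add_0_r. replace (fsub s (u n) (u n)) with (fzero s).
      rewrite N_zero. lra. apply fext; intro; unfold fsub, fzero; kring s.
    - eapply Rle_trans. apply N_tri with (b := u (n + k)%nat); apply Hu.
      rewrite Nat.add_succ_r. specialize (Hstep (n+k)%nat).
      replace ((/2)^(S (n+k))) with (/2 * (/2)^(n+k)) by (simpl; ring). nra. }
  destruct HB as (H0&Hadd&Hsc&Hmul&Hn&Hz&Hns&Ht&Hm&Hcomp).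
  destruct (Hcomp u (fun n => proj1 (Hu n))) as [t [Ht1 Ht2]].
  { intros eps Heps.
    destruct (pow_lt_1_zero (/2) ltac:(rewrite Rabs_right; lra) (eps / (2*B+1)))
      as [n0 Hn0]. { apply Rdiv_lt_0_compat; lra. }
    exists n0. intros n m Hn1 Hm1.
    assert (Hgen : forall a k, (a >= n0)%nat -> N (fsub s (u (a+k)%nat) (u a)) < eps).
    { intros a k Ha. eapply Rle_lt_trans. apply Hc.
      specialize (Hn0 a Ha). rewrite Rabs_right in Hn0 by (apply Rle_ge, pow_le; lra).
      assert (0 <= (/2)^(a+k)) by (apply pow_le; lra).
      assert ((/2)^a * (2*B+1) < eps).
      { apply Rmult_lt_compat_r with (r := 2*B+1) in Hn0; [|lra].
        unfold Rdiv in Hn0. rewrite Rmult_assoc, Rinv_l, Rmult_1_r in Hn0 by lra. lra. }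
      nra. }
    destruct (Nat.le_ge_cases n m) as [Hle|Hle].
    - replace m with (n + (m - n))%nat by lia.
      rewrite N_sub_sym by apply Hu. apply Hgen; auto.
    - replace n with (m + (n - m))%nat by lia. apply Hgen; auto. }
  assert (Htr : N t <= r).
  { apply le_eps. intros eps Heps. destruct (Ht2 eps Heps) as [n0 Hn0].
    specialize (Hn0 n0 (le_n _)). eapply Rle_trans. apply N_tri0 with (b := u n0); auto. apply Hu.
    rewrite N_sub_sym by (auto; apply Hu). pose proof (proj2 (Hu n0)). lra. }
  exists t. split; auto. split; auto.
  - assert (HPt : A (Phi t) /\ N (Phi t) <= r) by auto.
    assert (N (fsub s (Phi t) t) = 0).
    { apply Rle_antisym. 2: apply N_nn, A_sub; tauto.
      apply le_eps. intros eps Heps. destruct (Ht2 (eps/2) ltac:(lra)) as [n0 Hn0].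
      eapply Rle_trans. apply N_tri with (b := u (S n0)); try tauto; apply Hu.
      change (u (S n0)) with (Phi (u n0)) at 1.
      pose proof (Hlip t (u n0) Ht1 (proj1 (Hu n0))) as L.
      rewrite N_sub_sym with (f := t) in L by (auto; apply Hu).
      pose proof (Hn0 n0 (le_n _)). pose proof (Hn0 (S n0) (le_S _ _ (le_n _))).
      specialize (L ltac:(auto) (proj2 (Hu n0))). lra. }
    apply Hz in H; [| apply A_sub; tauto].
    apply fext; intro x. apply Ksub0. change (fsub s (Phi t) t x = fzero s x). rewrite H; auto.
Qed.
End S.

Lemma final_alg s (Fx Gx Fcx Gcx tx Ex ux : K s) :
 Kmul s Ex (Kadd s (Kmul s Fx Fcx) (Kmul s Gx Gcx)) = K1 s ->
 tx = Kmul s Ex (Kadd s (Kadd s ux (Kopp s (Kmul s Fx Gx)))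
                       (Kopp s (Kmul s (Kmul s Fcx Gcx) (Kmul s tx tx)))) ->
 ux = Kmul s (Kadd s Fx (Kmul s tx Gcx)) (Kadd s Gx (Kmul s tx Fcx)).
Proof.
  intros H1 H2.
  set (D := Kadd s (Kmul s Fx Fcx) (Kmul s Gx Gcx)).
  set (w' := Kadd s (Kadd s ux (Kopp s (Kmul s Fx Gx)))
                       (Kopp s (Kmul s (Kmul s Fcx Gcx) (Kmul s tx tx)))).
  fold D w' in H1, H2.
  assert (HtD : Kmul s tx D = w').
  { rewrite H2 at 1. transitivity (Kmul s (Kmul s Ex D) w'). kring s. rewrite H1. kring s. }
  transitivity (Kadd s (Kadd s (Kmul s Fx Gx) (Kmul s tx D)) (Kmul s (Kmul s Fcx Gcx) (Kmul s tx tx))).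
  2:{ unfold D. kring s. }
  rewrite HtD. unfold w'. kring s.
Qed.

Theorem theorem2p1 (s : sfield) (A : fn s -> Prop) (N : fn s -> R) :
  is_banach_function_algebra s A N ->
  continuously_embedded_in_B s A N ->
  symmetry_property s A N ->
  inverse_closedness_property s A N ->
  selection_principle s A N ->
  forall F G : fn s, A F -> A G -> jointly_nondegenerate s F G ->
    mult_locally_open_at s A N F G.
Proof.
  intros HB _ HS HIC _ F G AF AG [m [Hm HmF]] eps Heps.
  destruct (HS F AF) as [AFc NFc]. destruct (HS G AG) as [AGc NGc].
  set (Fc := fconj s F) in *. set (Gc := fconj s G) in *.
  set (D := fadd s (fmul s F Fc) (fmul s G Gc)).
  assert (AD : A D) by (apply (A_add s A N HB); auto; apply (A_mul s A N HB); auto).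
  set (P := fmul s Fc Gc).
  assert (AP : A P) by (apply (A_mul s A N HB); auto).
  assert (HDlow : forall x, m * m / 2 <= Kabs s (D x)).
  { intro x. unfold D, fadd, fmul, Fc, Gc, fconj. rewrite Kabs_D.
    pose proof (HmF x). pose proof (Kabs_nn s (F x)). pose proof (Kabs_nn s (G x)).
    assert (m*m <= (Kabs s (F x) + Kabs s (G x))*(Kabs s (F x) + Kabs s (G x))) by (apply Rmult_le_compat; lra).
    pose proof (Rle_0_sqr (Kabs s (F x) - Kabs s (G x))). unfold Rsqr in *. simpl. lra. }
  destruct (HIC D AD (m*m/2) ltac:(nra) HDlow) as [AE _].
  set (E := finv s D) in *.
  set (e := N E). set (p := N P). set (nF := N F). set (nG := N G).
  assert (He : 0 <= e) by (apply (N_nn s A N HB); auto).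
  assert (Hp : 0 <= p) by (apply (N_nn s A N HB); auto).
  assert (HnF : 0 <= nF) by (apply (N_nn s A N HB); auto).
  assert (HnG : 0 <= nG) by (apply (N_nn s A N HB); auto).
  set (r := Rmin (/(4*(e*p+1))) (eps/(2*(nF+nG+1)))).
  assert (Hr0 : 0 < r).
  { unfold r. apply Rmin_pos. apply Rinv_0_lt_compat; nra. apply Rdiv_lt_0_compat; lra. }
  assert (Hr1 : r * (4*(e*p+1)) <= 1).
  { assert (r <= /(4*(e*p+1))) by apply Rmin_l.
    apply Rmult_le_compat_r with (r := 4*(e*p+1)) in H; [|nra].
    rewrite Rinv_l in H by nra. auto. }
  assert (Hr2 : r * (2*(nF+nG+1)) <= eps).
  { assert (r <= eps/(2*(nF+nG+1))) by apply Rmin_r.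
    apply Rmult_le_compat_r with (r := 2*(nF+nG+1)) in H; [|nra].
    unfold Rdiv in H. rewrite Rmult_assoc, Rinv_l, Rmult_1_r in H by nra. auto. }
  exists (r / (2*(e+1))). split. { apply Rdiv_lt_0_compat; lra. }
  intros u Au Hu.
  set (w := fsub s u (fmul s F G)) in *.
  assert (Aw : A w) by (apply (A_sub s A N HB); auto; apply (A_mul s A N HB); auto).
  assert (Hwd : e * N w <= r / 2).
  { assert (Hw0 : 0 <= N w) by (apply (N_nn s A N HB); auto).
    assert (N w * (2*(e+1)) <= r).
    { apply Rmult_lt_compat_r with (r := 2*(e+1)) in Hu; [|lra].
      unfold Rdiv in Hu. rewrite Rmult_assoc, Rinv_l, Rmult_1_r in Hu by lra. lra. }
    nra. }
  set (Phi := fun t => fmul s E (fsub s w (fmul s P (fmul s t t)))).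
  destruct (fixpt s A N HB Phi r ltac:(lra)) as [t [At [Ntr Hfix]]].
  - intros t At Ntr. assert (Nt0 : 0 <= N t) by (apply (N_nn s A N HB); auto).
    assert (Att : A (fmul s t t)) by (apply (A_mul s A N HB); auto).
    assert (APtt : A (fmul s P (fmul s t t))) by (apply (A_mul s A N HB); auto).
    assert (AX : A (fsub s w (fmul s P (fmul s t t)))) by (apply (A_sub s A N HB); auto).
    split. { apply (A_mul s A N HB); auto. }
    unfold Phi. eapply Rle_trans. apply (N_mul s A N HB); auto. fold e.
    assert (H1 : N (fsub s w (fmul s P (fmul s t t))) <= N w + p * (N t * N t)).
    { eapply Rle_trans. apply (N_sub_le s A N HB); auto.
      apply Rplus_le_compat_l. eapply Rle_trans. apply (N_mul s A N HB); auto. fold p.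
      apply Rmult_le_compat_l; auto. apply (N_mul s A N HB); auto. }
    assert (H2 : e * p * r <= /4).
    { assert (e*p*r*4 <= 1) by nra. lra. }
    assert (e * (p * (N t * N t)) <= r/2).
    { assert (e*p*(N t * N t) <= e*p*(r*r)).
      { apply Rmult_le_compat_l. nra. apply Rmult_le_compat; auto. }
      nra. }
    assert (e * N (fsub s w (fmul s P (fmul s t t))) <= e * (N w + p * (N t * N t))).
    { apply Rmult_le_compat_l; auto. }
    nra.
  - intros t t' At At' Ntr Ntr'.
    assert (Nt0 : 0 <= N t) by (apply (N_nn s A N HB); auto).
    assert (Nt0' : 0 <= N t') by (apply (N_nn s A N HB); auto).
    replace (fsub s (Phi t) (Phi t'))
      with (fmul s E (fmul s P (fmul s (fsub s t' t) (fadd s t' t)))).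
    2:{ apply fext; intro x. unfold Phi, fmul, fsub, fadd. kring s. }
    assert (As : A (fsub s t' t)) by (apply (A_sub s A N HB); auto).
    assert (Aa : A (fadd s t' t)) by (apply (A_add s A N HB); auto).
    assert (Ns0 : 0 <= N (fsub s t' t)) by (apply (N_nn s A N HB); auto).
    assert (Na0 : 0 <= N (fadd s t' t)) by (apply (N_nn s A N HB); auto).
    assert (Ha : N (fadd s t' t) <= 2 * r).
    { eapply Rle_trans. apply (N_add s A N HB); auto. lra. }
    assert (H2 : e * p * r <= /4).
    { assert (e*p*r*4 <= 1) by nra. lra. }
    rewrite (N_sub_sym s A N HB t t') by auto.
    eapply Rle_trans. apply (N_mul s A N HB); auto. apply (A_mul s A N HB); auto. apply (A_mul s A N HB); auto. fold e.
    eapply Rle_trans. apply Rmult_le_compat_l; auto. apply (N_mul s A N HB); auto. apply (A_mul s A N HB); auto. fold p.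
    eapply Rle_trans. apply Rmult_le_compat_l; auto. apply Rmult_le_compat_l; auto.
    apply (N_mul s A N HB); auto.
    assert (N (fsub s t' t) * N (fadd s t' t) <= N (fsub s t' t) * (2 * r)).
    { apply Rmult_le_compat_l; auto. }
    assert (e * p * (N (fsub s t' t) * N (fadd s t' t)) <= e*p*(N (fsub s t' t) * (2 * r))).
    { apply Rmult_le_compat_l; nra. }
    nra.
  - exists (fadd s F (fmul s t Gc)), (fadd s G (fmul s t Fc)).
    assert (Nt0 : 0 <= N t) by (apply (N_nn s A N HB); auto).
    split. { apply (A_add s A N HB); auto. apply (A_mul s A N HB); auto. }
    split. { apply (A_add s A N HB); auto. apply (A_mul s A N HB); auto. }
    split.
    { replace (fsub s (fadd s F (fmul s t Gc)) F) with (fmul s t Gc).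
      2:{ apply fext; intro x; unfold fsub, fadd, fmul. kring s. }
      eapply Rle_lt_trans. apply (N_mul s A N HB); auto. rewrite NGc. fold nG.
      assert (N t * nG <= r * nG) by (apply Rmult_le_compat_r; auto). nra. }
    split.
    { replace (fsub s (fadd s G (fmul s t Fc)) G) with (fmul s t Fc).
      2:{ apply fext; intro x; unfold fsub, fadd, fmul. kring s. }
      eapply Rle_lt_trans. apply (N_mul s A N HB); auto. rewrite NFc. fold nF.
      assert (N t * nF <= r * nF) by (apply Rmult_le_compat_r; auto). nra. }
    apply fext; intro x. unfold fmul at 1, fadd.
    apply (final_alg s (F x) (G x) (Fc x) (Gc x) (t x) (E x) (u x)).
    + unfold E, finv. apply Kinv_l. pose proof (HDlow x). change (0 < Kabs s (D x)). assert (0 < m*m) by nra. lra.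
    + transitivity (Phi t x). rewrite Hfix; reflexivity. reflexivity.
Qed.
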